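(* Let $f:\mathbb{R}^n_{>0}\to\mathbb{R}^n_{>0}$ be order-preserving and homogeneous, and let $J\subseteq[n]$. The following are equivalent: (a) there is no nonempty $A\subseteq J$ such that $[n]\setminus A$ is invariant in $\mathcal{H}^-_0(f)$; (b) $\operatorname{reach}([n]\setminus J,\mathcal{H}^-_0(f))=[n]$; (c) $r(f^J_0)=0$. Similarly, the following are equivalent: (d) there is no nonempty $B\subseteq[n]\setminus J$ such that $[n]\setminus B$ is invariant in $\mathcal{H}^+_\infty(f)$; (e) $\operatorname{reach}(J,\mathcal{H}^+_\infty(f))=[n]$; (f) $\lambda(f^{[n]\setminus J}_\infty)=\infty$.
   Context: $[n]=\{1,\dots,n\}$; entrywise order. Order-preserving: $x\le y\Rightarrow f(x)\le f(y)$; homogeneous: $f(tx)=tf(x)$ for $t>0$. $f$ extends continuously to order-preserving homogeneous maps on $\mathbb{R}^n_{\ge0}$ and $(0,\infty]^n$, again denoted $f$. $P^J_\alpha(x)_j=x_j$ for $j\in J$, $\alpha$ otherwise; $f^J_0=P^J_0fP^J_0$, $f^J_\infty=P^J_\infty fP^J_\infty$; $r(g)=\inf_{x\in\mathbb{R}^n_{>0}}\max_ig(x)_i/x_i$, $\lambda(g)=\sup_{x\in\mathbb{R}^n_{>0}}\min_ig(x)_i/x_i$. For $I\subseteq[n]$, $e_I$ is the indicator vector of $I$, $\exp$ is entrywise. $\mathcal{H}^-_0(f)$ and $\mathcal{H}^+_\infty(f)$ are directed hypergraphs on nodes $[n]$ whose hyperarcs are the pairs $(I,\{j\})$ with $I\subseteq[n]$,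 $j\notin I$, and respectively $\lim_{t\to\infty}f(\exp(-te_I))_j=0$, resp. $\lim_{t\to\infty}f(\exp(te_I))_j=\infty$. A set $I\subseteq[n]$ is invariant in a hypergraph if there is no hyperarc $(I',\{j\})$ with $I'\subseteq I$ and $j\notin I$. $\operatorname{reach}(J,\mathcal{H})$ is the smallest invariant set containing $J$. *)

(* Defs.v *)
From HB Require Import structures.
From mathcomp Require Import all_boot all_order all_algebra.
From mathcomp Require Import all_classical all_reals all_analysis.
Set Implicit Arguments. Unset Strict Implicit. Unset Printing Implicit Defensive.
Import Order.TTheory GRing.Theory Num.Theory.
Import numFieldNormedType.Exports.
Local Open Scope classical_set_scope.
Local Open Scope ring_scope.

Section Defs.
Variables (R : realType) (n : nat).
Notation vec := ('I_n -> R).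

Definition posv : set vec := [set x | forall i, 0 < x i].

Definition maps_pos (f : vec -> vec) : Prop :=
  forall x, posv x -> posv (f x).

Definition order_preserving (f : vec -> vec) : Prop :=
  forall x y, posv x -> posv y -> (forall i, x i <= y i) -> forall i, f x i <= f y i.

Definition homogeneous (f : vec -> vec) : Prop :=
  forall (t : R) x, 0 < t -> posv x -> f (fun i => t * x i) = (fun i => t * f x i).

(* continuous extension of f to R^n_{>=0}: f(x) = inf_{y > x} f(y) *)
Definition ext0 (f : vec -> vec) (x : vec) : vec :=
  fun i => inf [set f y i | y in [set y : vec | forall k, x k < y k]].

(* continuous extension of f to (0,oo]^n: f(x) = sup_{0 < y < x} f(y) *)
Definition extoo (f : vec -> vec) (x : 'I_n -> \bar R) : 'I_n -> \bar R :=
  fun i => ereal_sup [set (f y i)%:E |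
                      y in [set y : vec | posv y /\ forall k, ((y k)%:E < x k)%E]].

Definition P0 (J : {set 'I_n}) (x : vec) : vec :=
  fun j => if j \in J then x j else 0.
Definition Poo (J : {set 'I_n}) (x : 'I_n -> \bar R) : 'I_n -> \bar R :=
  fun j => if j \in J then x j else +oo%E.

Definition fJ0 (J : {set 'I_n}) (f : vec -> vec) : vec -> vec :=
  fun x => P0 J (ext0 f (P0 J x)).
Definition fJoo (J : {set 'I_n}) (f : vec -> vec) : vec -> 'I_n -> \bar R :=
  fun x => Poo J (extoo f (Poo J (fun j => (x j)%:E))).

Definition spec_r (g : vec -> vec) : R :=
  inf [set \big[Num.max/0]_(i < n) (g x i / x i) | x in posv].
Definition spec_lambda (g : vec -> 'I_n -> \bar R) : \bar R :=
  ereal_sup [set \big[Order.min/+oo%E]_(i < n) (g x i * ((x i)^-1)%:E)%E | x in posv].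

Definition expv (s : R) (I : {set 'I_n}) : vec :=
  fun k => expR (s * (k \in I)%:R).

(* hyperarcs (I,{j}) of H^-_0(f) and H^+_oo(f) *)
Definition H0 (f : vec -> vec) (I : {set 'I_n}) (j : 'I_n) : Prop :=
  j \notin I /\ (f (expv (- t) I) j @[t --> +oo] --> 0%R).
Definition Hoo (f : vec -> vec) (I : {set 'I_n}) (j : 'I_n) : Prop :=
  j \notin I /\ (f (expv t I) j @[t --> +oo] --> +oo).

Definition hg_invariant (E : {set 'I_n} -> 'I_n -> Prop) (S : {set 'I_n}) : Prop :=
  forall I j, E I j -> I \subset S -> j \in S.

Definition reach (J : {set 'I_n}) (E : {set 'I_n} -> 'I_n -> Prop) : {set 'I_n} :=
  [set x | `[< forall S, hg_invariant E S -> J \subset S -> x \in S >]].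

End Defs.

(* Main.v *)
Require Import Defs.
From HB Require Import structures.
From mathcomp Require Import all_boot all_order all_algebra.
From mathcomp Require Import all_classical all_reals all_analysis.
From mathcomp Require Import lra.
Import Order.TTheory GRing.Theory Num.Theory.
Local Open Scope ring_scope.

Set Implicit Arguments. Unset Strict Implicit.

Lemma reach_sub (n : nat) (E : {set 'I_n} -> 'I_n -> Prop) (K : {set 'I_n}) : K \subset reach K E.
Proof. apply/fintype.subsetP => x xK; rewrite inE; apply/asboolP => S _ KS; exact: (fintype.subsetP KS). Qed.

Lemma reach_min (n : nat) (E : {set 'I_n} -> 'I_n -> Prop) (K S : {set 'I_n}) :
  hg_invariant E S -> K \subset S -> reach K E \subset S.
Proof. move=> iS KS; apply/fintype.subsetP => x; rewrite inE => /asboolP; exact. Qed.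

Lemma reach_inv (n : nat) (E : {set 'I_n} -> 'I_n -> Prop) (K : {set 'I_n}) : hg_invariant E (reach K E).
Proof.
move=> I j EIj IK; rewrite inE; apply/asboolP => S iS KS.
apply: (iS I j EIj); exact: (fintype.subset_trans IK (reach_min iS KS)).
Qed.

Lemma comb1 (n : nat) (E : {set 'I_n} -> 'I_n -> Prop) (K : {set 'I_n}) :
  ~ (exists A : {set 'I_n}, [/\ A != finset.set0, A \subset ~: K & hg_invariant E (~: A)]) ->
  reach K E = [set: 'I_n].
Proof.
move=> nA; apply: contra_notP nA => hne.
exists (~: reach K E); split.
- apply: contra_notN hne => /eqP h; by rewrite -(finset.setCK (reach K E)) h finset.setC0.
- by rewrite finset.setCS reach_sub.
- rewrite finset.setCK; exact: reach_inv.
Qed.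

Lemma comb2 (n : nat) (E : {set 'I_n} -> 'I_n -> Prop) (K : {set 'I_n}) :
  reach K E = [set: 'I_n] ->
  ~ (exists A : {set 'I_n}, [/\ A != finset.set0, A \subset ~: K & hg_invariant E (~: A)]).
Proof.
move=> hr [A [A0 AK iA]].
have : reach K E \subset ~: A by apply: reach_min => //; rewrite -finset.setCS finset.setCK.
rewrite hr finset.subTset => /eqP h.
move: A0; by rewrite -(finset.setCK A) h finset.setCT eqxx.
Qed.

Lemma reach_step (n : nat) (E : {set 'I_n} -> 'I_n -> Prop) (K : {set 'I_n}) :
  reach K E = [set: 'I_n] -> K != [set: 'I_n] ->
  exists I j, [/\ E I j, I \subset K & j \notin K].
Proof.
move=> hr hK; apply: contra_notP (negP hK) => hno.
have iK : hg_invariant E K.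
  move=> I j EIj IK; apply: contra_notT hno => jK; by exists I, j.
have := reach_min iK (fintype.subxx K); by rewrite hr finset.subTset.
Qed.

Lemma reach_mono (n : nat) (E : {set 'I_n} -> 'I_n -> Prop) (K K' : {set 'I_n}) :
  K \subset K' -> reach K E = [set: 'I_n] -> reach K' E = [set: 'I_n].
Proof.
move=> KK' hr; apply/eqP; rewrite finset.eqEsubset finset.subsetT /= -hr.
apply: reach_min; [exact: reach_inv| exact: fintype.subset_trans KK' (reach_sub _ _)].
Qed.

Lemma reach_ind (n : nat) (E : {set 'I_n} -> 'I_n -> Prop) (P : {set 'I_n} -> Prop) :
  P [set: 'I_n] ->
  (forall (K : {set 'I_n}) I j, E I j -> I \subset K -> j \notin K -> P (j |: K) -> P K) ->
  forall K, reach K E = [set: 'I_n] -> P K.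
Proof.
move=> PT step.
suff H : forall m K, (#|~: K| <= m)%N -> reach K E = [set: 'I_n] -> P K.
  by move=> K; apply: (H #|~: K|).
elim=> [|m IH] K hm hr.
  move: hm; rewrite leqn0 cards_eq0 => /eqP h.
  by rewrite -(finset.setCK K) h finset.setC0.
have [->|hK] := eqVneq K [set: 'I_n]; first exact: PT.
have [I [j [EIj IK jK]]] := reach_step hr hK.
apply: (step K I j) => //; apply: IH; last first.
  by apply: reach_mono hr; apply: finset.subsetUr.
rewrite -ltnS; apply: leq_trans hm; apply: proper_card.
apply/fintype.properP; split; first by rewrite finset.setCS finset.subsetUr.
exists j; first by rewrite inE.
by rewrite !inE eqxx.
Qed.

Local Open Scope classical_set_scope.

Lemma bigmin_lb (R : realType) (n : nat) (F : 'I_n -> R) :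
  (forall k, 0 < F k) ->
  0 < \big[Num.min/1]_k F k /\ forall k, \big[Num.min/1]_k F k <= F k.
Proof.
move=> Fp; split.
  by apply: (big_ind (fun v => 0 < v)) => // a b ha hb; rewrite lt_min ha hb.
move=> k; rewrite (bigD1 k) //= ge_min lexx; done.
Qed.

Lemma bigmax_ub (R : realType) (n : nat) (F : 'I_n -> R) k :
  F k <= \big[Num.max/0]_k F k.
Proof. by rewrite (bigD1 k) //= le_max lexx. Qed.

Lemma mono_lb (R : realType) (g : R -> R) :
  (forall s t, s <= t -> g t <= g s) -> (forall t, 0 <= g t) ->
  ~ (g t @[t --> +oo] --> 0) -> exists c, 0 < c /\ forall t, c <= g t.
Proof.
move=> gd g0 ncv; apply: contra_notP ncv => hno.
apply/cvgrPdist_le => e e0.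
have [t0 ht0] : exists t0, g t0 < e.
  apply: contra_notP hno => h; exists e; split => // t.
  by rewrite leNgt; apply/negP => ht; apply: h; exists t.
near=> t.
rewrite sub0r normrN ger0_norm //; apply/ltW/(le_lt_trans _ ht0)/gd.
near: t; apply: nbhs_pinfty_ge; exact: num_real.
Unshelve. all: end_near.
Qed.

Lemma mono_ub (R : realType) (g : R -> R) :
  (forall s t, s <= t -> g s <= g t) ->
  ~ (g t @[t --> +oo] --> +oo) -> exists C, forall t, g t <= C.
Proof.
move=> gi ncv; apply: contra_notP ncv => hno.
apply/cvgryPge => A.
have [t0 ht0] : exists t0, A < g t0.
  apply: contra_notP hno => h; exists A => t.
  by rewrite leNgt; apply/negP => ht; apply: h; exists t.
near=> t.
apply/ltW/(lt_le_trans ht0)/gi.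
near: t; apply: nbhs_pinfty_ge; exact: num_real.
Unshelve. all: end_near.
Qed.

Lemma cvg0_get (R : realType) (g : R -> R) e :
  0 < e -> (g t @[t --> +oo] --> 0) -> exists t, 0 <= t /\ g t <= e.
Proof.
move=> e0 /cvgrPdist_le /(_ e e0) [M [_ HM]].
exists (Num.max 0 M + 1); split.
  by apply: addr_ge0 => //; rewrite le_max lexx.
have := HM (Num.max 0 M + 1).
have h : M < Num.max 0 M + 1.
  by apply: (le_lt_trans (y := Num.max 0 M)); [rewrite le_max lexx orbT|rewrite ltrDl].
move=> /(_ h); rewrite sub0r normrN => h2; exact: le_trans (ler_norm _) h2.
Qed.

Lemma cvgy_get (R : realType) (g : R -> R) A :
  (g t @[t --> +oo] --> +oo) -> exists t, 0 <= t /\ A <= g t.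
Proof.
move=> /cvgryPge /(_ A) [M [_ HM]].
exists (Num.max 0 M + 1); split.
  by apply: addr_ge0 => //; rewrite le_max lexx.
apply: HM.
by apply: (le_lt_trans (y := Num.max 0 M)); [rewrite le_max lexx orbT|rewrite ltrDl].
Qed.

Lemma expv_in (R : realType) n s (I : {set 'I_n}) k : k \in I -> expv s I k = expR s :> R.
Proof. by move=> kI; rewrite /expv kI mulr1. Qed.
Lemma expv_out (R : realType) n s (I : {set 'I_n}) k : k \notin I -> expv s I k = 1 :> R.
Proof. by move=> kI; rewrite /expv (negbTE kI) mulr0 expR0. Qed.
Lemma expv_pos (R : realType) n s (I : {set 'I_n}) : posv (expv s I : 'I_n -> R).
Proof. by move=> k; rewrite /expv expR_gt0. Qed.

Definition Good0 (R : realType) n (f : ('I_n -> R) -> ('I_n -> R)) (K : {set 'I_n}) :=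
  forall eps : R, 0 < eps -> exists x : 'I_n -> R,
    [/\ posv x, (forall k, x k <= 1), (exists c, 0 < c /\ forall k, k \in K -> x k = c)
      & forall i, i \notin K -> f x i <= eps * x i].

Lemma Good0T (R : realType) n (f : ('I_n -> R) -> ('I_n -> R)) : Good0 f [set: 'I_n].
Proof.
move=> eps _; exists (fun _ => 1); split.
- by move=> k; rewrite ltr01.
- by [].
- by exists 1; split => //; rewrite ltr01.
- by move=> i; rewrite inE.
Qed.

Lemma Good0_step (R : realType) n (f : ('I_n -> R) -> ('I_n -> R)) (K I : {set 'I_n}) j :
  order_preserving f -> H0 f I j -> I \subset K -> j \notin K -> Good0 f (j |: K) -> Good0 f K.
Proof.
move=> fmono [_ Hcv] IK jK G eps eps0.
have [x' [x'p x'1 [c [c0 xc]] x'f]] := G eps eps0.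
have cj : x' j = c by apply: xc; rewrite !inE eqxx.
have c1 : c <= 1 by rewrite -cj.
have [t [t0 ht]] := cvg0_get (mulr_gt0 eps0 c0) Hcv.
set d := expR (- t).
have d0 : 0 < d by apply: expR_gt0.
have d1 : d <= 1 by rewrite /d expR_le1 oppr_le0.
exists (fun k => if k \in K then d * c else x' k); split.
- by move=> k; case: ifP => _; [apply: mulr_gt0|apply: x'p].
- move=> k; case: ifP => _ //; rewrite -[1]mulr1; apply: ler_pM => //; exact: ltW.
- by exists (d * c); split; [apply: mulr_gt0|move=> k ->].
move=> i iK /=; rewrite (negbTE iK).
have xp : posv (fun k => if k \in K then d * c else x' k).
  by move=> k; case: ifP => _; [apply: mulr_gt0|apply: x'p].
have [->|ij] := eqVneq i j.
  rewrite cj; apply: le_trans ht; apply: fmono => //; first exact: expv_pos.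
  move=> k; case: ifP => kK.
    have [kI|kI] := boolP (k \in I).
      by rewrite expv_in //; rewrite -[X in _ <= X]mulr1 ler_pM // ltW.
    by rewrite expv_out //; rewrite -[1]mulr1; apply: ler_pM => //; exact: ltW.
  have kI : k \notin I by apply: contraFN kK; apply: (fintype.subsetP IK).
  by rewrite expv_out.
have iK' : i \notin j |: K by rewrite !inE negb_or ij.
apply: le_trans (x'f i iK'); apply: fmono => // k.
case: ifP => kK //.
rewrite xc; last by rewrite !inE kK orbT.
by rewrite -[X in _ <= X]mul1r ler_pM // ltW.
Qed.

Definition Goodoo (R : realType) n (f : ('I_n -> R) -> ('I_n -> R)) (K : {set 'I_n}) :=
  forall M : R, 0 < M -> exists x : 'I_n -> R,
    [/\ posv x, (forall k, 1 <= x k), (exists c, 1 <= c /\ forall k, k \in K -> x k = c)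
      & forall i, i \notin K -> M * x i <= f x i].

Lemma GoodooT (R : realType) n (f : ('I_n -> R) -> ('I_n -> R)) : Goodoo f [set: 'I_n].
Proof.
move=> M _; exists (fun _ => 1); split.
- by move=> k; rewrite ltr01.
- by [].
- by exists 1; split.
- by move=> i; rewrite inE.
Qed.

Lemma Goodoo_step (R : realType) n (f : ('I_n -> R) -> ('I_n -> R)) (K I : {set 'I_n}) j :
  order_preserving f -> Hoo f I j -> I \subset K -> j \notin K -> Goodoo f (j |: K) -> Goodoo f K.
Proof.
move=> fmono [_ Hcv] IK jK G M M0.
have [x' [x'p x'1 [c [c1 xc]] x'f]] := G M M0.
have cj : x' j = c by apply: xc; rewrite !inE eqxx.
have c0 : 0 < c by apply: lt_le_trans c1; rewrite ltr01.
have [t [t0 ht]] := cvgy_get (M * c) Hcv.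
set d := expR t.
have d1 : 1 <= d by rewrite /d -expR0 ler_expR.
have d0 : 0 < d by apply: expR_gt0.
exists (fun k => if k \in K then d * c else x' k); split.
- by move=> k; case: ifP => _; [apply: mulr_gt0|apply: x'p].
- move=> k; case: ifP => _ //; rewrite -[1]mulr1; apply: ler_pM => //; exact: ler01.
- by exists (d * c); split; [rewrite -[1]mulr1; apply: ler_pM => //; exact: ler01|move=> k ->].
move=> i iK /=; rewrite (negbTE iK).
have xp : posv (fun k => if k \in K then d * c else x' k).
  by move=> k; case: ifP => _; [apply: mulr_gt0|apply: x'p].
have [->|ij] := eqVneq i j.
  rewrite cj; apply: (le_trans ht); apply: fmono => //; first exact: expv_pos.
  move=> k; case: ifP => kK.
    have [kI|kI] := boolP (k \in I).
      by rewrite expv_in //; rewrite -[X in X <= _]mulr1 ler_pM // ltW.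
    by rewrite expv_out //; rewrite -[1]mulr1; apply: ler_pM => //; exact: ler01.
  have kI : k \notin I by apply: contraFN kK; apply: (fintype.subsetP IK).
  by rewrite expv_out.
have iK' : i \notin j |: K by rewrite !inE negb_or ij.
apply: (le_trans (x'f i iK')); apply: fmono => // k.
case: ifP => kK //.
rewrite xc; last by rewrite !inE kK orbT.
by rewrite -[X in X <= _]mul1r ler_pM // ltW.
Qed.

Lemma posv1 (R : realType) n : posv (fun _ : 'I_n => 1 : R).
Proof. by move=> k; rewrite ltr01. Qed.

Lemma spec_r_zero (R : realType) n (g : ('I_n -> R) -> ('I_n -> R)) :
  (forall x, posv x -> forall i, 0 <= g x i) ->
  (forall eps, 0 < eps -> exists x, posv x /\ forall i, g x i <= eps * x i) ->
  spec_r g = 0.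
Proof.
move=> g0 hg; rewrite /spec_r.
set S := (X in inf X).
have S0 : S !=set0.
  by exists (\big[Num.max/0]_(i < n) (g (fun=> 1) i / 1)); exists (fun => 1) => //; exact: posv1.
have lb0 : lbound S 0.
  move=> _ [x xp <-]; apply: (big_ind (fun v => 0 <= v)) => //.
    by move=> a b ha hb; rewrite le_max ha.
  by move=> i _; apply: divr_ge0; [exact: g0|exact: ltW].
have h1 : 0 <= inf S := lb_le_inf S0 lb0.
have hlb : has_lbound S by exists 0.
have h2 : forall eps, 0 < eps -> inf S <= eps.
  move=> eps eps0; have [x [xp hx]] := hg eps eps0.
  have hin : S (\big[Num.max/0]_(i < n) (g x i / x i)) by exists x.
  apply: le_trans (ge_inf hlb hin) _.
  apply: (big_ind (fun v => v <= eps)); first exact: ltW.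
    by move=> a b ha hb; rewrite ge_max ha.
  by move=> i _; rewrite ler_pdivrMr.
apply/eqP; rewrite eq_le h1 andbT; rewrite leNgt; apply/negP => hp.
have := h2 (inf S / 2); rewrite divr_gt0 // => /(_ isT); lra.
Qed.

Lemma spec_r_pos (R : realType) n (g : ('I_n -> R) -> ('I_n -> R)) c :
  0 < c -> (forall x, posv x -> exists i, c <= g x i / x i) -> spec_r g != 0.
Proof.
move=> c0 hg; rewrite /spec_r.
set S := (X in inf X).
have S0 : S !=set0.
  by exists (\big[Num.max/0]_(i < n) (g (fun=> 1) i / 1)); exists (fun => 1) => //; exact: posv1.
have lbc : lbound S c.
  move=> _ [x xp <-]; have [i hi] := hg x xp.
  by apply: le_trans hi _; rewrite (bigD1 i) //= le_max lexx.
have := lb_le_inf S0 lbc => h; apply/eqP => h'; move: h; rewrite h'; lra.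
Qed.

Lemma spec_lambda_oo (R : realType) n (g : ('I_n -> R) -> 'I_n -> \bar R) :
  (forall M, 0 < M -> exists x, posv x /\ forall i, (M%:E <= g x i * ((x i)^-1)%:E)%E) ->
  spec_lambda g = +oo%E.
Proof.
move=> hg.
have h : forall M, 0 < M -> (M%:E <= spec_lambda g)%E.
  move=> M M0; have [x [xp hx]] := hg M M0.
  apply: le_trans (ereal_sup_ubound _); last first.
    by exists x.
  apply: (big_ind (fun v => M%:E <= v)%E); first exact: leey.
    by move=> a b ha hb; rewrite le_min ha.
  by move=> i _; apply: hx.
move: h; case: (spec_lambda g) => [r| |] h //.
  have := h (Num.max r 0 + 1).
  have hp : 0 < Num.max r 0 + 1.
    by apply: (lt_le_trans ltr01); rewrite lerDr le_max lexx orbT.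
  move=> /(_ hp); rewrite lee_fin => h'; clear h hg; exfalso.
  have : r <= Num.max r 0 by rewrite le_max lexx.
  lra.
by have := h 1 ltr01.
Qed.

Lemma spec_lambda_fin (R : realType) n (g : ('I_n -> R) -> 'I_n -> \bar R) (C : R) :
  (forall x, posv x -> exists i, (g x i * ((x i)^-1)%:E <= C%:E)%E) ->
  spec_lambda g != +oo%E.
Proof.
move=> hg.
have : (spec_lambda g <= C%:E)%E.
  apply: ge_ereal_sup => _ [x xp <-].
  have [i hi] := hg x xp.
  by apply: le_trans hi; rewrite (bigD1 i) //= ge_min lexx.
by case: (spec_lambda g).
Qed.

Lemma ext0_le (R : realType) n (f : ('I_n -> R) -> ('I_n -> R)) z y i :
  maps_pos f -> (forall k, 0 <= z k) -> (forall k, z k < y k) -> ext0 f z i <= f y i.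
Proof.
move=> fpos z0 zy; rewrite /ext0.
have hlb : has_lbound [set f y0 i | y0 in [set y0 : 'I_n -> R | forall k, z k < y0 k]].
  exists 0 => _ [y' hy' <-]; apply/ltW/fpos => k.
  exact: le_lt_trans (z0 k) (hy' k).
by apply: (ge_inf hlb); exists y.
Qed.

Lemma ext0_ge (R : realType) n (f : ('I_n -> R) -> ('I_n -> R)) z i c :
  (forall y, (forall k, z k < y k) -> c <= f y i) -> c <= ext0 f z i.
Proof.
move=> hc; rewrite /ext0; apply: lb_le_inf.
  exists (f (fun k => z k + 1) i); exists (fun k => z k + 1) => // k.
  by rewrite ltrDl.
by move=> _ [y hy <-]; apply: hc.
Qed.

Lemma extoo_ge (R : realType) n (f : ('I_n -> R) -> ('I_n -> R)) z y i :
  posv y -> (forall k, ((y k)%:E < z k)%E) -> ((f y i)%:E <= extoo f z i)%E.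
Proof.
move=> yp hy; rewrite /extoo; apply: ereal_sup_ubound; by exists y.
Qed.

Lemma extoo_le (R : realType) n (f : ('I_n -> R) -> ('I_n -> R)) z i (C : R) :
  (forall y, posv y -> (forall k, ((y k)%:E < z k)%E) -> f y i <= C) ->
  (extoo f z i <= C%:E)%E.
Proof.
move=> hC; rewrite /extoo; apply: ge_ereal_sup => _ [y [yp hy] <-].
by rewrite lee_fin; apply: hC.
Qed.

Local Close Scope classical_set_scope.
Unset Implicit Arguments. Set Strict Implicit.
Local Open Scope ring_scope.

Theorem lemma3p9 (R : realType) (n : nat) (f : ('I_n -> R) -> ('I_n -> R))
    (J : {set 'I_n}) :
  maps_pos f -> order_preserving f -> homogeneous f ->
  [<-> ~ (exists A : {set 'I_n}, [/\ A != finset.set0, A \subset J & hg_invariant (H0 f) (~: A)]);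
       reach (~: J) (H0 f) = [set: 'I_n];
       spec_r (fJ0 J f) = 0]
  /\
  [<-> ~ (exists B : {set 'I_n}, [/\ B != finset.set0, B \subset ~: J & hg_invariant (Hoo f) (~: B)]);
       reach J (Hoo f) = [set: 'I_n];
       spec_lambda (fJoo (~: J) f) = +oo%E].
Proof.
move=> fpos fmono fhom.
have P0ge0 : forall x : 'I_n -> R, posv x -> forall k, 0 <= P0 J x k.
  by move=> x xp k; rewrite /P0; case: ifP => _ //; exact: ltW.
split.
- tfae.
  + by move=> h; apply: comb1; rewrite finset.setCK.
  + move=> hr.
    have G : Good0 f (~: J).
      apply: (@reach_ind n (H0 f) (Good0 f) (@Good0T R n f) _ (~: J) hr).
      by move=> K I j EIj IK jK; exact: (@Good0_step R n f K I j fmono EIj IK jK).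
    apply: spec_r_zero.
      move=> x xp i; rewrite /fJ0 {1}/P0; case: ifP => // _.
      apply: ext0_ge => y hy; apply/ltW/fpos => k.
      exact: le_lt_trans (P0ge0 x xp k) (hy k).
    move=> eps eps0.
    have [x [xp _ _ hx]] := G (eps / 2) (divr_gt0 eps0 (ltr0Sn _ 1)).
    exists x; split => // i.
    rewrite /fJ0 {1}/P0; case: ifP => iJ; last first.
      by apply: mulr_ge0; [exact: ltW|exact: ltW].
    have hlt : forall k, P0 J x k < (fun k => 2 * x k) k.
      by move=> k; rewrite /P0; case: ifP => _; have := xp k; lra.
    apply: le_trans (@ext0_le R n f (P0 J x) (fun k => 2 * x k) i fpos (P0ge0 x xp) hlt) _.
    rewrite fhom //; have := hx i; rewrite inE iJ => /(_ isT); have := xp i.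
    nra.
  + move=> hr [A [A0 AJ iA]]; move: hr; apply/eqP.
    set g := fun (a : 'I_n) (t : R) => f (expv (- t) (~: A)) a.
    have hc : forall a, exists c : R, 0 < c /\ (a \in A -> forall t, c <= g a t).
      move=> a; have [aA|aA] := boolP (a \in A); last by exists 1; split => //; rewrite ltr01.
      have ncv : ~ (g a t @[t --> +oo] --> 0)%classic.
        move=> cv; have : a \in ~: A by apply: (iA (~: A) a) => //; split => //; rewrite inE aA.
        by rewrite inE aA.
      have hd : forall s t, s <= t -> g a t <= g a s.
        move=> s t st; apply: fmono; try exact: expv_pos.
        move=> k; rewrite /expv ler_expR; case: (k \in ~: A); rewrite ?mulr1 ?mulr0 //.
        by rewrite lerN2.
      have hn : forall t, 0 <= g a t by move=> t; apply/ltW/fpos/expv_pos.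
      have [c [c0 hc]] := mono_lb hd hn ncv.
      by exists c; split.
    have [cf hcf] := boolp.choice hc.
    have [c0 cle] := bigmin_lb (fun a => proj1 (hcf a)).
    apply: (spec_r_pos c0) => x xp.
    have [a0 a0A] := set0Pn _ A0.
    case: (@arg_minP _ _ _ a0 (fun i => i \in A) x a0A) => a aA amin.
    exists a.
    have aJ : a \in J := fintype.subsetP AJ a aA.
    rewrite ler_pdivlMr //.
    rewrite /fJ0; set z := P0 J x; rewrite {1}/P0 aJ.
    apply: ext0_ge => y hy.
    have yp : posv y by move=> k; apply: le_lt_trans (P0ge0 x xp k) (hy k).
    have [d0 dle] := bigmin_lb yp.
    set d := \big[Num.min/1]_k y k in d0 dle.
    set m := x a.
    have m0 : 0 < m := xp a.
    set t := m / d.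
    have t0 : 0 <= t by apply: divr_ge0; apply: ltW.
    have hle : forall k, m * expv (- t) (~: A) k <= y k.
      move=> k; have [kA|kA] := boolP (k \in ~: A).
        rewrite expv_in // expRN ler_pdivrMr ?expR_gt0 //.
        have e1 : d * t = m by rewrite /t mulrC divfK // gt_eqF.
        have e2 := ler_wpM2l (ltW d0) (expR_ge1Dx t).
        have e3 : d * expR t <= y k * expR t by rewrite ler_wpM2r // ?dle // ltW // expR_gt0.
        lra.
      rewrite expv_out // mulr1.
      move: kA; rewrite inE negbK => kA.
      have hk := hy k; rewrite /z /P0 (fintype.subsetP AJ k kA) in hk.
      have := amin k kA; rewrite -/m => hmk; lra.
    have hm : f (fun k => m * expv (- t) (~: A) k) a = m * g a t.
      by rewrite fhom //; exact: expv_pos.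
    apply: le_trans (fmono _ _ _ yp hle a).
      rewrite hm mulrC; apply: ler_wpM2l; first exact: ltW.
      by apply: le_trans (cle a) _; apply: (proj2 (hcf a)).
    by move=> k; apply: mulr_gt0 => //; exact: expv_pos.
- tfae.
  + by move=> h; apply: comb1.
  + move=> hr.
    have G : Goodoo f J.
      apply: (@reach_ind n (Hoo f) (Goodoo f) (@GoodooT R n f) _ J hr).
      by move=> K I j EIj IK jK; exact: (@Goodoo_step R n f K I j fmono EIj IK jK).
    apply: spec_lambda_oo => M M0.
    have [x [xp _ _ hx]] := G (2 * M) (mulr_gt0 (ltr0Sn _ 1) M0).
    exists x; split => // i.
    rewrite /fJoo; set z := Poo (~: J) (fun j => (x j)%:E); rewrite {1}/Poo.
    case: ifP => iJ; last first.
      by rewrite mulyr gtr0_sg ?mul1e ?leey // invr_gt0.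
    have yp : posv (fun k => 2^-1 * x k).
      by move=> k; apply: mulr_gt0; [rewrite invr_gt0 ltr0Sn|exact: xp].
    have hyz : forall k, (((fun k => 2^-1 * x k) k)%:E < z k)%E.
      move=> k; rewrite /z /Poo; case: ifP => _; last exact: ltry.
      by rewrite lte_fin; have := xp k; lra.
    have h1 := @extoo_ge R n f z _ i yp hyz.
    have h0 : (0 <= ((x i)^-1)%:E)%E by rewrite lee_fin invr_ge0 ltW.
    apply: le_trans (@lee_wpmul2r _ _ h0 _ _ h1).
    rewrite fhom //= -EFinM lee_fin ler_pdivlMr //.
    have iJ' : i \notin J by move: iJ; rewrite inE.
    have := hx i iJ'; have := xp i; lra.
  + move=> hl [B [B0 BJ iB]]; move: hl; apply/eqP.
    set g := fun (b : 'I_n) (t : R) => f (expv t (~: B)) b.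
    have hC : forall b, exists C : R, (b \in B -> forall t, g b t <= C).
      move=> b; have [bB|bB] := boolP (b \in B); last by exists 0.
      have ncv : ~ (g b t @[t --> +oo] --> +oo)%classic.
        move=> cv; have : b \in ~: B by apply: (iB (~: B) b) => //; split => //; rewrite inE bB.
        by rewrite inE bB.
      have hi : forall s t, s <= t -> g b s <= g b t.
        move=> s t st; apply: fmono; try exact: expv_pos.
        move=> k; rewrite /expv ler_expR; case: (k \in ~: B); rewrite ?mulr1 ?mulr0 //.
      have [C hC] := mono_ub hi ncv.
      by exists C.
    have [Cf hCf] := boolp.choice hC.
    apply: (@spec_lambda_fin R n _ (\big[Num.max/0]_b Cf b)) => x xp.
    have [b0 b0B] := set0Pn _ B0.
    case: (@arg_maxP _ _ _ b0 (fun i => i \in B) x b0B) => b bB bmax.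
    exists b.
    have bJ : b \in ~: J := fintype.subsetP BJ b bB.
    rewrite /fJoo; set z := Poo (~: J) (fun j => (x j)%:E); rewrite {1}/Poo bJ.
    set m := x b.
    have m0 : 0 < m := xp b.
    have h1 : (extoo f z b <= (m * \big[Num.max/0]_b Cf b)%:E)%E.
      apply: extoo_le => y yp hy.
      have D0 : 0 < \big[Num.max/0]_k y k by apply: lt_le_trans (yp b) (bigmax_ub y b).
      set D := \big[Num.max/0]_k y k in D0.
      set t := D / m.
      have t0 : 0 <= t by apply: divr_ge0; apply: ltW.
      have hle : forall k, y k <= m * expv t (~: B) k.
        move=> k; have [kB|kB] := boolP (k \in ~: B).
          rewrite expv_in //.
          have e1 : m * t = D by rewrite /t mulrC divfK // gt_eqF.
          have e2 := ler_wpM2l (ltW m0) (expR_ge1Dx t).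
          have := bigmax_ub y k; rewrite -/D; lra.
        rewrite expv_out // mulr1.
        move: kB; rewrite inE negbK => kB.
        have hk := hy k; rewrite /z /Poo (fintype.subsetP BJ k kB) lte_fin in hk.
        have hmk : x k <= m := bmax k kB.
        lra.
      have hm : f (fun k => m * expv t (~: B) k) b = m * g b t.
        by rewrite fhom //; exact: expv_pos.
      have hpos : posv (fun k => m * expv t (~: B) k).
        by move=> k; apply: mulr_gt0 => //; exact: expv_pos.
      have yle := fmono _ _ yp hpos hle b.
      rewrite hm in yle; apply: (le_trans yle).
      apply: ler_wpM2l; first exact: ltW.
      exact: le_trans (hCf b bB t) (bigmax_ub Cf b).
    have h0 : (0 <= ((x b)^-1)%:E)%E by rewrite lee_fin invr_ge0 ltW.
    apply: le_trans (@lee_wpmul2r _ _ h0 _ _ h1) _.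
    by rewrite -EFinM mulrAC divff ?gt_eqF // mul1r.
Qed.
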